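(* Let $G$ be a discriminating group and let $S\subset F$ be a set of weak identities in $G$. Then every element $s\in S$ is an identity in $G$, i.e. $\pi(s)=1$ for every homomorphism $\pi:F\to G$.
   Context: A group $G$ is discriminating if for every integer $N$ and every $h_1,\dots,h_N\in G\times G$ there is a homomorphism $\rho:G\times G\to G$ with $\rho(h_i)=1$ if and only if $h_i=1$, for each $i$. Let $F$ be the free group on countably many generators $g_1,g_2,\dots$. For $N\ge 1$, $F^{\times N}$ is the direct product of $N$ copies of $F$, $i_k:F\to F^{\times N}$ the $k$-th inclusion. A subset $S\subset F$ is a set of weak identities in $G$ if there exists $N\ge1$ such that for any $s_1,\dots,s_N\in S$ and any homomorphism $\rho:F^{\times N}\to G$ some $k$ has $\rho(i_k(s_k))=1$. *)

(* Defs.v *)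
From mathcomp Require Import all_boot.
Set Implicit Arguments. Unset Strict Implicit. Unset Printing Implicit Defensive.

Record group := Group {
  gcar :> Type;
  gmul : gcar -> gcar -> gcar;
  gone : gcar;
  ginv : gcar -> gcar;
  gmulA : forall x y z, gmul x (gmul y z) = gmul (gmul x y) z;
  gmul1 : forall x, gmul gone x = x;
  gmulV : forall x, gmul (ginv x) x = gone
}.

Definition hom_prod (G : group) (rho : G * G -> G) : Prop :=
  forall a b : G * G, rho (gmul a.1 b.1, gmul a.2 b.2) = gmul (rho a) (rho b).

Definition discriminating (G : group) : Prop :=
  forall (N : nat) (h : 'I_N -> G * G),
    exists rho : G * G -> G, hom_prod rho /\
      forall i, rho (h i) = gone G <-> h i = (gone G, gone G).

(* Free group on generators indexed by nat: reduced words over letters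
   (n, b), where (n, true) is g_n and (n, false) is g_n^-1. *)
Definition letter := (nat * bool)%type.
Definition canc (a b : letter) : bool := (a.1 == b.1) && (a.2 != b.2).
Definition reduced (w : seq letter) : bool := sorted (fun a b => ~~ canc a b) w.

Record fword := FWord { fw :> seq letter; fw_red : reduced fw }.

Definition push (a : letter) (w : seq letter) : seq letter :=
  match w with
  | [::] => [:: a]
  | b :: w' => if canc a b then w' else a :: w
  end.

Lemma push_reduced a w : reduced w -> reduced (push a w).
Proof.
case: w => [|b w] //= H.
case: ifP => Hc.
  by apply: (path_sorted H).
by rewrite /reduced /= Hc H.
Qed.

Definition norm (w : seq letter) : seq letter := foldr push [::] w.

Lemma norm_reduced w : reduced (norm w).
Proof. by elim: w => [|a w IH] //=; apply: push_reduced. Qed.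

Definition fmul (u v : fword) : fword := FWord (norm_reduced (fw u ++ fw v)).
Definition fone : fword := @FWord [::] isT.

Definition hom_F (G : group) (f : fword -> G) : Prop :=
  forall u v, f (fmul u v) = gmul (f u) (f v).

Definition FN (N : nat) := {ffun 'I_N -> fword}.

Definition hom_FN (G : group) (N : nat) (rho : FN N -> G) : Prop :=
  forall u v : FN N, rho [ffun k => fmul (u k) (v k)] = gmul (rho u) (rho v).

Definition incl (N : nat) (k : 'I_N) (s : fword) : FN N :=
  [ffun j => if j == k then s else fone].

Definition weak_identities (G : group) (S : fword -> Prop) : Prop :=
  exists N : nat, 1 <= N /\
    forall s : 'I_N -> fword, (forall k, S (s k)) ->
      forall rho : FN N -> G, hom_FN rho ->
        exists k : 'I_N, rho (incl k (s k)) = gone G.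

(* Main.v *)
Require Import Defs.
From mathcomp Require Import all_boot.
From Stdlib Require Import FunctionalExtensionality Classical.

Section Aux.
Variable G : group.
Local Notation "x * y" := (gmul x y).
Local Notation one := (gone G).

Lemma idem1 (y : G) : y * y = y -> y = one.
Proof.
move=> H. have := gmulV y. rewrite -{2}H gmulA gmulV gmul1. by [].
Qed.

Definition e (a : G) (k : nat) : nat -> G := fun i => if i == k then a else one.

Lemma stepP (a : G) : discriminating G -> a <> one -> forall n : nat,
  exists sigma : (nat -> G) -> G,
    (forall x y, sigma (fun i => x i * y i) = sigma x * sigma y) /\
    (forall x, (forall i, i < n -> x i = one) -> sigma x = one) /\
    (forall k, k < n -> sigma (e a k) <> one).
Proof.
move=> D Ha; elim=> [|n [sigma [Hh [Ht He]]]].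
  exists (fun _ => one); split; [by move=> *; rewrite gmul1|split=> //].
have [rho [Hr Hd]] := D n.+1 (fun i : 'I_n.+1 =>
   if (i < n)%N then (sigma (e a i), one) else (one, a)).
have r1 : rho (one, one) = one.
  apply: idem1; rewrite -Hr /=; by rewrite gmul1.
exists (fun x => rho (sigma x, x n)); split; [|split].
- move=> x y; by rewrite Hh -Hr.
- move=> x Hx; rewrite Ht; last by move=> i Hi; apply: Hx; apply: ltnW.
  by rewrite Hx.
- move=> k Hk.
  have := Hd (Ordinal Hk) => /=.
  case: ltnP => Hkn /= [H1 _] Hc.
  + have Hen : e a k n = one by rewrite /e; case: eqP => // E; move: Hkn; rewrite E ltnn.
    rewrite Hen in Hc; have [E1 _] := (f_equal fst (H1 Hc), 0); by apply: (He k Hkn).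
  + have Ekn : k = n by apply/eqP; rewrite eqn_leq Hkn -ltnS Hk.
    subst k.
    have Hs : sigma (e a n) = one by apply: Ht => i Hi; rewrite /e; case: eqP => // E; move: Hi; rewrite E ltnn.
    rewrite Hs /e eqxx in Hc.
    by have := f_equal snd (H1 Hc).
Qed.
End Aux.

Lemma fone_mul : fmul fone fone = fone.
Proof.
rewrite /fmul /fone /=. congr FWord. apply: eq_irrelevance.
Qed.

Theorem theorem6p3 (G : group) (S : fword -> Prop) :
  discriminating G -> weak_identities G S ->
  forall s : fword, S s -> forall pi : fword -> G, hom_F pi -> pi s = gone G.
Proof.
move=> D [N [_ W]] s Ss pi Hpi.
apply: NNPP => Ha.
have pi1 : pi fone = gone G by apply: idem1; rewrite -Hpi fone_mul.
have [sigma [Hh [_ He]]] := @stepP G (pi s) D Ha N.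
pose rho (u : FN N) := sigma (fun i => oapp (fun k => pi (u k)) (gone G) (insub i)).
have Hr : hom_FN rho.
  move=> u v; rewrite /rho -Hh; congr sigma; apply: functional_extensionality => i.
  case: (insub i) => [k|] /=; first by rewrite ffunE Hpi.
  by rewrite gmul1.
have [k Hk] := W (fun _ => s) (fun _ => Ss) rho Hr.
apply: (He _ (ltn_ord k)); rewrite -Hk /rho; congr sigma.
apply: functional_extensionality => i; rewrite /e.
case: insubP => [k' _ Ek|Hi] /=.
  rewrite /incl ffunE -Ek; case: (k' =P k) => [->|Ne]; first by rewrite eqxx.
  case: eqP => // E; by case: Ne; apply: val_inj.
case: eqP => // E; by move: Hi; rewrite E ltn_ord.
Qed.
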